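(* Let $f:\mathbb{R}^n\to\mathbb{R}$ satisfy: (A1) $f\in C^\infty(\mathbb{R}^n)$; (A2) there is $M>0$ such that $f(x)>0$ for all $x\notin B(0,M)$; (A3) $\nabla f(p)\neq 0$ for every $p\in\mathcal{B}:=\{p\in\mathbb{R}^n: f(p)=0\}$, and assume $\mathcal{B}\neq\emptyset$. For $x\in\mathbb{R}^n$ let $d(x)=\min_{p\in\mathcal{B}}\|x-p\|$ and for $\sigma>0$ let $\Omega_\sigma=\{x\in\mathbb{R}^n: d(x)<\sigma\}$. Then for each angle $\alpha\in\left(-\frac{\pi}{4},\frac{\pi}{4}\right)$ there exists $\sigma>0$ such that for every $x\in\Omega_\sigma$ we have $\nabla f(x)\neq 0$, the set \[T(x)=\Big\{t\ge 0:\ x-t\,\mathrm{sgn}(f(x))\,\frac{\nabla f(x)}{\|\nabla f(x)\|}\in\mathcal{B}\Big\}\] is nonempty, and its smallest element $t(x)=\min T(x)$ satisfies \[ d(x)\le t(x)\le 2\cos(\alpha)\,d(x).\]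
   Context: $\|\cdot\|$ is the Euclidean norm, $B(x,r)$ is the open Euclidean ball of center $x$ and radius $r$, and $\mathrm{sgn}$ is the sign function (with $\mathrm{sgn}(0)=0$). Under (A1)–(A3), $\mathcal{B}$ is a compact smooth hypersurface of $\mathbb{R}^n$, so the minimum defining $d(x)$ is attained. *)

(* Defs.v *)
From HB Require Import structures.
From mathcomp Require Import all_boot all_order all_algebra.
From mathcomp Require Import all_classical all_reals all_analysis.
Set Implicit Arguments. Unset Strict Implicit. Unset Printing Implicit Defensive.
Import Order.TTheory GRing.Theory Num.Theory.
Import numFieldNormedType.Exports.
Local Open Scope classical_set_scope.
Local Open Scope ring_scope.

Section Defs.
Variables (R : realType) (n : nat).
Notation V := 'rV[R]_n.

(* Euclidean norm (the library norm on matrices is the sup norm). *)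
Definition enorm (x : V) : R := Num.sqrt (\sum_(i < n) (x ord0 i) ^+ 2).

Definition ebasis (i : 'I_n) : V := \row_(j < n) (i == j)%:R.

Fixpoint iter_deriv (vs : seq V) (f : V -> R) : V -> R :=
  match vs with
  | [::] => f
  | v :: vs' => fun x => 'D_v (iter_deriv vs' f) x
  end.

Definition smooth (f : V -> R) : Prop :=
  forall vs : seq 'I_n,
    continuous (iter_deriv (map ebasis vs) f) /\
    forall (i : 'I_n) (x : V), derivable (iter_deriv (map ebasis vs) f) x (ebasis i).

Definition grad (f : V -> R) (x : V) : V := \row_(i < n) 'D_(ebasis i) f x.

Definition zeroset (f : V -> R) : set V := [set p | f p = 0].

(* Distance to the zero set (a minimum under the hypotheses; defined as inf). *)
Definition dist_zero (f : V -> R) (x : V) : R :=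
  inf [set enorm (x - p) | p in zeroset f].

Definition Omega (f : V -> R) (sigma : R) : set V :=
  [set x | dist_zero f x < sigma].

Definition Tset (f : V -> R) (x : V) : set R :=
  [set t | 0 <= t /\
     zeroset f (x - (t * Num.sg (f x) / enorm (grad f x)) *: grad f x)].

End Defs.

(* Main.v *)
Require Import Defs.
From HB Require Import structures.
From mathcomp Require Import all_boot all_order all_algebra.
From mathcomp Require Import all_classical all_reals all_analysis.
From mathcomp Require Import ring lra.
Set Implicit Arguments. Unset Strict Implicit. Unset Printing Implicit Defensive.
Import Order.TTheory GRing.Theory Num.Theory.
Import numFieldNormedType.Exports.
Local Open Scope classical_set_scope.
Local Open Scope ring_scope.
Section E.
Variables (R : realType) (n : nat).
Notation V := 'rV[R]_n.
Definition sq (x : V) := \sum_(i < n) (x ord0 i) ^+ 2.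
Lemma sq_ge0 (x : V) : 0 <= sq x.
Proof. by apply: sumr_ge0 => i _; apply: sqr_ge0. Qed.
Lemma enormE (x : V) : enorm x ^+ 2 = sq x.
Proof. by rewrite /enorm sqr_sqrtr // sq_ge0. Qed.
Lemma enorm_ge0 (x : V) : 0 <= enorm x.
Proof. exact: sqrtr_ge0. Qed.
Lemma coord_le_enorm (x : V) i : `|x ord0 i| <= enorm x.
Proof.
rewrite /enorm -sqrtr_sqr; apply: ler_wsqrtr.
rewrite (bigD1 i) //= lerDl; apply: sumr_ge0 => j _; exact: sqr_ge0.
Qed.
Lemma enormZ c (x : V) : enorm (c *: x) = `|c| * enorm x.
Proof.
rewrite /enorm -sqrtr_sqr -sqrtrM ?sqr_ge0 //; congr Num.sqrt.
rewrite mulr_sumr; apply: eq_bigr => i _; rewrite mxE; ring.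
Qed.
Lemma CS (a b : V) : \sum_(i < n) a ord0 i * b ord0 i <= enorm a * enorm b.
Proof.
set A := enorm a; set B := enorm b; set s := \sum_(i < n) _.
have A0 : 0 <= A by exact: enorm_ge0.
have B0 : 0 <= B by exact: enorm_ge0.
have [Az|Anz] := eqVneq A 0.
  rewrite Az mul0r /s big1 // => i _.
  have := coord_le_enorm a i; rewrite -/A Az => h.
  have : `|a ord0 i| = 0 by apply/le_anti; rewrite h normr_ge0.
  by move/eqP; rewrite normr_eq0 => /eqP ->; rewrite mul0r.
have [Bz|Bnz] := eqVneq B 0.
  rewrite Bz mulr0 /s big1 // => i _.
  have := coord_le_enorm b i; rewrite -/B Bz => h.
  have : `|b ord0 i| = 0 by apply/le_anti; rewrite h normr_ge0.
  by move/eqP; rewrite normr_eq0 => /eqP ->; rewrite mulr0.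
have E : \sum_(i < n) (B * a ord0 i - A * b ord0 i) ^+ 2 =
   B ^+ 2 * sq a - 2 * A * B * s + A ^+ 2 * sq b.
  rewrite /sq /s !mulr_sumr -sumrB -big_split /=; apply: eq_bigr => i _; ring.
have : 0 <= \sum_(i < n) (B * a ord0 i - A * b ord0 i) ^+ 2.
  by apply: sumr_ge0 => i _; exact: sqr_ge0.
rewrite E -!enormE -/A -/B => h.
have AB : 0 < A * B by rewrite mulr_gt0 // lt0r ?Anz ?Bnz.
nra.
Qed.
Lemma line_is_derive (f : V -> R) (a v : V) (s0 : R) :
  derivable f (a + s0 *: v) v ->
  is_derive s0 1 (fun s : R => f (a + s *: v)) ('D_v f (a + s0 *: v)).
Proof.
move=> H.
have E : (fun h : R => h^-1 *: (((fun s : R => f (a + s *: v)) \o shift s0) (h *: 1)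
            - f (a + s0 *: v))) =
         (fun h : R => h^-1 *: ((f \o shift (a + s0 *: v)) (h *: v) - f (a + s0 *: v))).
  apply: funext => h /=; congr (_ *: (f _ - _)).
  by rewrite /shift /= [_%:A]mulr1 scalerDl; rewrite addrCA.
by split; rewrite /derivable /derive E.
Qed.

Lemma step_mvt (f : V -> R) (a v : V) (u : R) :
  (forall s : R, derivable f (a + s *: v) v) ->
  exists2 l : R, 0 <= l <= 1 &
    f (a + u *: v) - f a = 'D_v f (a + (l * u) *: v) * u.
Proof.
move=> hd.
have D (x : R) : is_derive x (1:R) (fun s : R => f (a + s *: v)) ('D_v f (a + x *: v)).
  exact: line_is_derive.
have C : forall (i : interval R), {within [set` i], continuous (fun s : R => f (a + s *: v))}.
  by move=> i; apply: derivable_within_continuous => x _; exact: (@ex_derive _ _ _ _ _ _ _ (D x)).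
have [ult|ugt|ueq] := ltgtP u 0.
- have [c cI E] := @MVT R (fun s : R => f (a + s *: v)) (fun x => 'D_v f (a + x *: v)) u 0 ult (fun x _ => D x) (C _).
  exists (c / u).
    move: cI; rewrite in_itv /= => /andP[c0 cu].
    apply/andP; split; first by rewrite -divrNN divr_ge0 // oppr_ge0 ltW.
    by rewrite ler_ndivrMr // mul1r ltW.
  move: E; rewrite scale0r addr0 sub0r divfK ?lt_eqF // => E.
  by rewrite -[LHS]opprB E mulrN opprK.
- have [c cI E] := @MVT R (fun s : R => f (a + s *: v)) (fun x => 'D_v f (a + x *: v)) 0 u ugt (fun x _ => D x) (C _).
  exists (c / u).
    move: cI; rewrite in_itv /= => /andP[c0 cu].
    apply/andP; split; first by rewrite divr_ge0 // ltW.
    by rewrite ler_pdivrMr // mul1r ltW.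
  by move: E; rewrite scale0r addr0 subr0 divfK ?gt_eqF.
- exists 0; first by rewrite lexx ler01.
  by rewrite ueq !scale0r addr0 subrr mulr0.
Qed.

Lemma sum_split_lt (F : 'I_n -> R) (k : nat) (hk : (k < n)%N) :
  \sum_(j < n | (j < k.+1)%N) F j = \sum_(j < n | (j < k)%N) F j + F (Ordinal hk).
Proof.
rewrite (bigD1 (Ordinal hk)) /=; last by rewrite ltnSn.
rewrite addrC; congr (_ + _); apply: eq_bigl => j.
rewrite -val_eqE /= ltnS leq_eqVlt.
by case: (ltngtP j k).
Qed.

Lemma telescope (f : V -> R) (a b p G : V) (kap r : R) :
  (forall (w : V) j, derivable f w (ebasis R j)) ->
  (forall i, `|a ord0 i - p ord0 i| < r) ->
  (forall i, `|b ord0 i - p ord0 i| < r) ->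
  (forall w : V, (forall i, `|w ord0 i - p ord0 i| < r) ->
     forall j, `|'D_(ebasis R j) f w - G ord0 j| <= kap) ->
  `|f b - f a - \sum_(j < n) G ord0 j * (b ord0 j - a ord0 j)|
     <= kap * \sum_(j < n) `|b ord0 j - a ord0 j|.
Proof.
move=> hd ha hb hD.
pose z (k : nat) : V := \row_j (if (j < k)%N then b ord0 j else a ord0 j).
have zin k i : `|z k ord0 i - p ord0 i| < r.
  by rewrite /z mxE; case: ifP.
suff H : forall k, (k <= n)%N ->
  `|f (z k) - f a - \sum_(j < n | (j < k)%N) G ord0 j * (b ord0 j - a ord0 j)|
     <= kap * \sum_(j < n | (j < k)%N) `|b ord0 j - a ord0 j|.
  have := H n (leqnn n).
  have -> : z n = b by apply/rowP => j; rewrite /z mxE ltn_ord.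
  have E1 : forall F : 'I_n -> R, \sum_(j < n | (j < n)%N) F j = \sum_(j < n) F j.
    by move=> F; apply: eq_bigl => j; rewrite ltn_ord.
  by rewrite !E1.
elim=> [_|k IH hk].
  have -> : z 0%N = a by apply/rowP => j; rewrite /z mxE ltn0.
  by rewrite !big_pred0 // subrr subr0 normr0 mulr0.
have hk' : (k < n)%N by exact: hk.
set kk := Ordinal hk'.
have IH' := IH (ltnW hk).
have Ez : z k.+1 = z k + (b ord0 kk - a ord0 kk) *: ebasis R kk.
  apply/rowP => j; rewrite /z /ebasis !mxE -val_eqE /= ltnS leq_eqVlt.
  case: (ltngtP j k) => hjk /=.
  - by rewrite mulr0 addr0.
  - by rewrite mulr0 addr0.
  - have -> : j = kk by apply/val_inj.
    by rewrite mulr1 addrC subrK.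
have [l /andP [l0 l1] Emvt] := step_mvt (b ord0 kk - a ord0 kk) (fun s => hd (z k + s *: ebasis R kk) kk).
move/eqP: Emvt; rewrite subr_eq => /eqP Emvt.
rewrite !sum_split_lt Ez Emvt.
set xi := z k + _ *: _.
have xin : forall i, `|xi ord0 i - p ord0 i| < r.
  move=> i; rewrite /xi /ebasis !mxE.
  have [eik|nik] := eqVneq kk i.
    rewrite -eik /= ltnn mulr1.
    have -> : a ord0 kk + l * (b ord0 kk - a ord0 kk) - p ord0 kk =
       (1 - l) * (a ord0 kk - p ord0 kk) + l * (b ord0 kk - p ord0 kk) by ring.
    have h1 := ha kk; have h2 := hb kk.
    apply: (le_lt_trans (ler_normD _ _)); rewrite !normrM.
    rewrite (@ger0_norm _ l) // (@ger0_norm _ (1 - l)) ?subr_ge0 //.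
    have [l1e|l1l] := eqVneq l 1.
      by rewrite l1e subrr mul0r add0r mul1r.
    have : 0 < 1 - l by rewrite subr_gt0 lt_neqAle l1l l1.
    nra.
  by rewrite mulr0 addr0; case: ifP.
have hDk := hD xi xin kk.
set S := \sum_(j < n | (j < k)%N) _.
set T := \sum_(j < n | (j < k)%N) _ in IH'.
set u := b ord0 kk - a ord0 kk.
pose D : R := 'D_(ebasis R kk) f xi.
have -> : 'D_(ebasis R kk) f xi * u + f (z k) - f a - (S + G ord0 kk * u) =
   (f (z k) - f a - S) + (D - G ord0 kk) * u by rewrite /D; ring.
have h2 : `|(D - G ord0 kk) * u| <= kap * `|u|.
  by rewrite normrM; apply: ler_wpM2r.
have h3 := ler_normD (f (z k) - f a - S) ((D - G ord0 kk) * u).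
apply: (le_trans h3); rewrite [X in _ <= X]mulrDr; exact: lerD.
Qed.
Lemma enorm_eq0 (v : V) : enorm v = 0 -> v = 0.
Proof.
move=> h; apply/rowP => j; rewrite mxE.
have := coord_le_enorm v j; rewrite h => h'.
by apply/eqP; rewrite -normr_le0.
Qed.
Lemma row_subZ (a b : V) (c : R) i : (a - c *: b) ord0 i = a ord0 i - c * b ord0 i.
Proof. by rewrite !mxE. Qed.
Lemma enorm0 : enorm (0 : V) = 0.
Proof. by rewrite -(scale0r (0 : V)) enormZ normr0 mul0r. Qed.
Lemma sum_le_const (F : 'I_n -> R) (c : R) : (forall j, F j <= c) -> \sum_(j < n) F j <= c * n%:R.
Proof.
move=> h; apply: le_trans (ler_sum _ (fun j _ => h j)) _.
by rewrite sumr_const card_ord mulr_natr.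
Qed.
Lemma CSabs (a b : V) : `|\sum_(i < n) a ord0 i * b ord0 i| <= enorm a * enorm b.
Proof.
rewrite ler_norml CS andbT lerNl.
have := CS ((-1) *: a) b; rewrite enormZ normrN1 mul1r.
have -> : \sum_(i < n) ((-1) *: a) ord0 i * b ord0 i = - \sum_(i < n) a ord0 i * b ord0 i.
  by rewrite -sumrN; apply: eq_bigr => i _; rewrite mxE; ring.
by [].
Qed.
Lemma key (f : V -> R) (x p : V) (r kap dl : R) :
  (forall (w : V) j, derivable f w (ebasis R j)) -> continuous f ->
  0 < kap -> kap * n%:R <= 1/10 ->
  f p = 0 -> grad f p != 0 ->
  (forall y z : V, (forall i, `|y ord0 i - p ord0 i| < r) ->
     (forall i, `|z ord0 i - p ord0 i| < r) ->
     forall j, `|'D_(ebasis R j) f y - 'D_(ebasis R j) f z| <= kap * enorm (grad f z)) ->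
  enorm (x - p) < dl -> 3 * dl <= r ->
  grad f x != 0 /\ exists t, 0 <= t <= 5/4 * dl /\
     f (x - (t * Num.sg (f x) / enorm (grad f x)) *: grad f x) = 0.
Proof.
move=> hd fc k0 kn fp gp hP xp dr.
have dl0 : 0 < dl by apply: le_lt_trans (enorm_ge0 _) xp.
have r0 : 0 < r by lra.
have xpi i : `|x ord0 i - p ord0 i| < r.
  have := coord_le_enorm (x - p) i; rewrite !mxE => h.
  apply: le_lt_trans h _; lra.
have ppi i : `|p ord0 i - p ord0 i| < r by rewrite subrr normr0.
set G := grad f x.
have GE j : G ord0 j = 'D_(ebasis R j) f x by rewrite /G /grad mxE.
have Gn0 : G != 0.
  apply/negP => /eqP G0; move/negP: gp; apply; apply/eqP/rowP => j; rewrite /grad !mxE.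
  have := hP p x ppi xpi j; rewrite -/G G0 enorm0 mulr0 normr_le0 subr_eq0 => /eqP ->.
  by rewrite -GE G0 !mxE.
split => //.
have eG : 0 < enorm G.
  rewrite lt_neqAle enorm_ge0 andbT eq_sym; apply/negP => /eqP /enorm_eq0 h.
  by move/eqP: Gn0.
set s := Num.sg (f x).
have [fx0|fxn0] := eqVneq (f x) 0.
  exists 0; split; first by rewrite lexx /=; apply: mulr_ge0 => //; lra.
  by rewrite !mul0r scale0r subr0.
have s1 : `|s| = 1 by rewrite normr_sg fxn0.
have ss : s * s = 1 by rewrite -expr2 -real_normK ?s1 ?expr1n // realE; case: (ltgtP 0 s) => h; rewrite ?ltW.
have sfx : 0 < s * f x by rewrite -normrEsg normr_gt0.
pose h := fun t : R => x - (t * s / enorm G) *: G.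
pose g := fun t : R => f (h t).
have gc : continuous g.
  move=> t; apply: (@continuous_comp _ _ _ h f); last exact: fc.
  apply: continuousB; first exact: cst_continuous.
  have -> : (fun t => (t * s / enorm G) *: G) = ( *:%R^~ G) \o ( *%R^~ (s / enorm G)).
    by apply: funext => u /=; rewrite mulrA.
  apply: continuous_comp; [exact: mulrr_continuous | exact: scalel_continuous].
set T1 := 5/4 * dl.
have T10 : 0 <= T1 by rewrite /T1; lra.
set y := h T1.
have cG i : `|T1 * s / enorm G * G ord0 i| <= T1.
  have -> : T1 * s / enorm G * G ord0 i = T1 * (s * (G ord0 i / enorm G)) by ring.
  rewrite normrM (ger0_norm T10) normrM s1 mul1r; apply: ler_piMr => //.
  by rewrite normrM normfV (gtr0_norm eG) ler_pdivrMr // mul1r; exact: coord_le_enorm.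
have yi' i : `|y ord0 i - p ord0 i| < 9/4 * dl.
  have h1 := coord_le_enorm (x - p) i; rewrite !mxE in h1.
  rewrite /y /h row_subZ.
  have -> : x ord0 i - T1 * s / enorm G * G ord0 i - p ord0 i =
     (x ord0 i - p ord0 i) - T1 * s / enorm G * G ord0 i by ring.
  apply: le_lt_trans (ler_normB _ _) _.
  have := cG i; rewrite /T1 => h2; lra.
have yi i : `|y ord0 i - p ord0 i| < r.
  by apply: lt_le_trans (yi' i) _; lra.
have tel := @telescope f p y p G (kap * enorm G) r hd ppi yi
   (fun w hw j => ltac:(rewrite GE; exact: hP w x hw xpi j)).
have sb : \sum_(j < n) `|y ord0 j - p ord0 j| <= (9/4 * dl) * n%:R.
  by apply: sum_le_const => j; apply: ltW.
set X := \sum_(j < n) G ord0 j * (x ord0 j - p ord0 j).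
have dot : \sum_(j < n) G ord0 j * (y ord0 j - p ord0 j) = X - T1 * s * enorm G.
  rewrite (eq_bigr (fun j => G ord0 j * (x ord0 j - p ord0 j) - T1 * s / enorm G * G ord0 j ^+ 2)); last first.
    by move=> j _; rewrite /y /h row_subZ; ring.
  rewrite sumrB -mulr_sumr.
  have -> : \sum_(j < n) G ord0 j ^+ 2 = enorm G ^+ 2 by rewrite enormE.
  by rewrite expr2 mulrA divfK ?gt_eqF.
have cs : s * X <= enorm G * enorm (x - p).
  have -> : s * X = \sum_(j < n) (s *: G) ord0 j * (x - p) ord0 j.
    by rewrite /X mulr_sumr; apply: eq_bigr => j _; rewrite !mxE; ring.
  by apply: le_trans (CS _ _) _; rewrite enormZ s1 mul1r.
rewrite dot fp subr0 in tel.
set E := f y - (X - T1 * s * enorm G) in tel.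
have hE : s * E <= kap * enorm G * ((9/4 * dl) * n%:R).
  apply: le_trans (ler_norm _) _; rewrite normrM s1 mul1r.
  apply: le_trans tel _; apply: ler_wpM2l => //.
  by apply: mulr_ge0; [apply: ltW | apply: enorm_ge0].
have hX : s * X <= enorm G * dl.
  by apply: le_trans cs _; apply: ler_wpM2l; [apply: enorm_ge0 | apply: ltW].
have eGdl : 0 < enorm G * dl by apply: mulr_gt0.
have hK : kap * enorm G * ((9/4 * dl) * n%:R) <= 9/40 * (enorm G * dl).
  have -> : kap * enorm G * ((9/4 * dl) * n%:R) = (kap * n%:R) * (enorm G * dl) * (9/4) by ring.
  nra.
have fyE : s * f y = s * E + s * X - T1 * (s * s) * enorm G.
  by rewrite /E; ring.
rewrite ss mulr1 in fyE.
have sfy : s * f y < 0 by rewrite fyE /T1; lra.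
have g0 : g 0 = f x by rewrite /g /h !mul0r scale0r subr0.
have gT : g T1 = f y by [].
have prod : f x * f y < 0.
  have : (s * f x) * (s * f y) < 0 by rewrite pmulr_rlt0.
  have -> : (s * f x) * (s * f y) = f x * f y * (s * s) by ring.
  by rewrite ss mulr1.
have hv : Num.min (g 0) (g T1) <= 0 <= Num.max (g 0) (g T1).
  rewrite g0 gT ge_min le_max.
  have [fxp|fxn] := ltP 0 (f x).
    have fyn : f y < 0 by nra.
    by apply/andP; split; apply/orP; [right|left]; lra.
  have fyp : 0 < f y by nra.
  by apply/andP; split; apply/orP; [left|right]; lra.
have [t tI gt] := @IVT R g 0 T1 0 T10 (continuous_subspaceT gc) hv.
exists t; split; last exact: gt.
by move: tI; rewrite in_itv /=.
Qed.
End E.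
Section M.
Variables (R : realType) (n : nat).
Notation V := 'rV[R]_n.
Lemma toball (q w : V) (e : R) : 0 < e -> (forall i, `|w ord0 i - q ord0 i| < e) -> ball q e w.
Proof.
move=> e0 h; split => // i j; rewrite (ord1 i) -ball_normE /ball_ /= distrC; exact: h.
Qed.
Lemma fromball (q w : V) (e : R) : ball q e w -> forall i, `|w ord0 i - q ord0 i| < e.
Proof.
by case=> _ h i; have := h ord0 i; rewrite -ball_normE /ball_ /= distrC.
Qed.
Lemma mxnorm_le (v : V) : `|v| <= enorm v.
Proof.
rewrite [X in X <= _]/Num.norm /= mx_normrE; apply: bigmax_le; first exact: enorm_ge0.
by move=> [i j] _; rewrite (ord1 i); exact: coord_le_enorm.
Qed.
Lemma line_cont (f : V -> R) (x v : V) (a b : R) : continuous f ->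
  continuous (fun t : R => f (x - (t * a / b) *: v)).
Proof.
move=> fc t.
apply: (@continuous_comp _ _ _ (fun t : R => x - (t * a / b) *: v) f); last exact: fc.
apply: continuousB; first exact: cst_continuous.
have -> : (fun t => (t * a / b) *: v) = ( *:%R^~ v) \o ( *%R^~ (a / b)).
  by apply: funext => u /=; rewrite mulrA.
apply: continuous_comp; [exact: mulrr_continuous | exact: scalel_continuous].
Qed.
End M.

Lemma cos_bound (R : realType) (alpha : R) : - (pi / 4) < alpha < pi / 4 -> 5/4 <= 2 * cos alpha.
Proof.
move=> /andP[a1 a2].
have p0 := pi_gt0 R.
have c2 : 0 < cos (alpha + alpha).
  apply: cos_gt0_pihalf; apply/andP; split; lra.
have c1 : 0 < cos alpha by apply: cos_gt0_pihalf; apply/andP; split; lra.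
move: c2; rewrite cosD -!expr2 sin2cos2 => c2.
nra.
Qed.

Theorem theorem2 (R : realType) (n : nat) (f : 'rV[R]_n -> R) :
  smooth f ->
  (exists M : R, 0 < M /\ forall x, ~ (enorm x < M) -> 0 < f x) ->
  (forall p, zeroset f p -> grad f p != 0) ->
  zeroset f !=set0 ->
  forall alpha : R, - (pi / 4) < alpha < pi / 4 ->
  exists sigma : R, 0 < sigma /\
    forall x, Omega f sigma x ->
      grad f x != 0 /\
      exists tx : R, Tset f x tx /\ (forall t, Tset f x t -> tx <= t) /\
        dist_zero f x <= tx /\ tx <= 2 * cos alpha * dist_zero f x.
Proof.
move=> hs [M [M0 hM]] hA3 [p0 Bp0] alpha halpha.
have calpha := cos_bound halpha.
have fc : continuous f := (hs [::]).1.
have hd : forall (w : 'rV[R]_n) j, derivable f w (ebasis R j) := fun w j => (hs [::]).2 j w.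
have Dc : forall j, continuous (fun w => 'D_(ebasis R j) f w) := fun j => (hs [:: j]).1.
set B := zeroset f.
have Bc : compact B.
  apply: bounded_closed_compact.
    rewrite /= /bounded_near; near=> K => p Bp /=.
    apply: le_trans (mxnorm_le p) _.
    have : enorm p < M.
      apply/negPn/negP => /negP h; have := hM p h; rewrite Bp ltxx //.
    have : M <= K by near: K; apply: nbhs_pinfty_ge; rewrite num_real.
    move=> h1 h2; apply: ltW; exact: lt_le_trans h2 h1.
  exact: (proj1 (continuous_closedP f) fc [set x : R | x = 0] (@closed_eq R 0)).
pose kap : R := 1 / (10 * n.+1%:R).
have N0 : 0 < n.+1%:R :> R by rewrite ltr0Sn.
have k0 : 0 < kap by rewrite /kap divr_gt0 // mulr_gt0.
have kn : kap * n%:R <= 1/10.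
  have hn : n%:R <= n.+1%:R :> R by rewrite ler_nat.
  rewrite /kap mul1r mulrC ler_pdivrMr ?mulr_gt0 //; lra.
have k1 : kap <= 1/10.
  rewrite /kap ler_pdivrMr ?mulr_gt0 //.
  have : 1 <= n.+1%:R :> R by rewrite ler1n.
  lra.
pose P (r : R) (q : 'rV[R]_n) := forall y z : 'rV[R]_n,
  (forall i, `|y ord0 i - q ord0 i| < r) -> (forall i, `|z ord0 i - q ord0 i| < r) ->
  forall j, `|'D_(ebasis R j) f y - 'D_(ebasis R j) f z| <= kap * enorm (grad f z).
have loc : forall q, B q -> \forall q' \near q & r \near 0^'+, P r q'.
  move=> q Bq.
  have gq := hA3 q Bq.
  have [j0 hj0] : exists j, 'D_(ebasis R j) f q != 0.
    case: (pselect (exists j, 'D_(ebasis R j) f q != 0)) => // hno.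
    exfalso; move/negP: gq; apply; apply/eqP/rowP => j; rewrite !mxE.
    by apply/eqP/negPn/negP => hj; apply: hno; exists j.
  set mu := `|'D_(ebasis R j0) f q|.
  have mu0 : 0 < mu by rewrite normr_gt0.
  set eps := kap * mu / 4.
  have eps0 : 0 < eps by rewrite /eps divr_gt0 // mulr_gt0.
  have NB : \forall w \near q, forall i, `|'D_(ebasis R i) f q - 'D_(ebasis R i) f w| < eps.
    apply: (@filter_forall _ _ (fun i w => `|'D_(ebasis R i) f q - 'D_(ebasis R i) f w| < eps) (nbhs q) (nbhs_filter q)) => i.
    have := cvgr_dist_lt _ _ (Dc i q) _ eps0.
    by move=> /(_ (nbhs_filter q)).
  move: NB => /nbhs_ballP [rho rho0 hrho].
  have rho20 : 0 < rho / 2 by rewrite divr_gt0.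
  exists (ball q (rho / 2), [set r | 0 < r < rho / 2]).
    split; first exact: nbhsx_ballx.
    near=> u; apply/andP; split; near: u; [exact: nbhs_right_gt | exact: nbhs_right_lt].
  move=> [q' r] [/= hq' /andP[r0 rlt]] y z hy hz j.
  have hq'i := fromball hq'.
  have near_q : forall w : 'rV[R]_n, (forall i, `|w ord0 i - q' ord0 i| < r) ->
      forall i, `|'D_(ebasis R i) f q - 'D_(ebasis R i) f w| < eps.
    move=> w hw.
    have hwq : forall i, `|w ord0 i - q ord0 i| < rho.
      move=> i.
      have -> : w ord0 i - q ord0 i = (w ord0 i - q' ord0 i) + (q' ord0 i - q ord0 i) by ring.
      apply: le_lt_trans (ler_normD _ _) _.
      have := hw i; have := hq'i i; lra.
    exact: (hrho w (toball rho0 hwq)).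
  have hy' := near_q y hy; have hz' := near_q z hz.
  have e1 : `|'D_(ebasis R j) f y - 'D_(ebasis R j) f z| <= 2 * eps.
    have -> : 'D_(ebasis R j) f y - 'D_(ebasis R j) f z =
      ('D_(ebasis R j) f q - 'D_(ebasis R j) f z) - ('D_(ebasis R j) f q - 'D_(ebasis R j) f y) by ring.
    apply: le_trans (ler_normB _ _) _.
    have := hy' j; have := hz' j; lra.
  have e2 : mu / 2 <= enorm (grad f z).
    apply: le_trans (coord_le_enorm _ j0); rewrite mxE.
    have : mu <= `|'D_(ebasis R j0) f q - 'D_(ebasis R j0) f z| + `|'D_(ebasis R j0) f z|.
      have h := ler_normD ('D_(ebasis R j0) f q - 'D_(ebasis R j0) f z) ('D_(ebasis R j0) f z).
      by rewrite subrK in h.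
    have := hz' j0.
    have : eps <= mu / 40 by rewrite /eps; nra.
    lra.
  apply: le_trans e1 _.
  have := ler_wpM2l (ltW k0) e2.
  rewrite /eps; lra.
have NC0 := (proj1 (compact_near_coveringP B) Bc) R (0^'+) P _ loc.
have NC : \forall r \near 0^'+, B `<=` P r by apply: NC0.
have [r [/= r0 Pr]] := filter_ex (filterI (nbhs_right_gt 0) NC).
pose sigma := r / 3.
have s0 : 0 < sigma by rewrite /sigma divr_gt0.
exists sigma; split => // x.
rewrite /Omega /dist_zero /= -/B.
set E := [set enorm (x - p) | p in B].
set d := inf E => dlt.
have En : E !=set0 by exists (enorm (x - p0)), p0.
have Elb : has_lbound E by exists 0 => _ [p _ <-]; exact: enorm_ge0.
have d0 : 0 <= d by apply: lb_le_inf En _ => _ [p _ <-]; exact: enorm_ge0.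
have dle : forall p, B p -> d <= enorm (x - p).
  by move=> p Bp; apply: (ge_inf Elb); exists p.
have dadh : forall e, 0 < e -> exists2 p, B p & enorm (x - p) < d + e.
  move=> e e0; have [_ [p Bp <-] hp] := inf_adherent e0 (conj En Elb).
  by exists p.
have KEY : forall e, 0 < e -> e <= sigma - d -> grad f x != 0 /\ exists t, 0 <= t <= 5/4 * (d + e) /\ f (x - (t * Num.sg (f x) / enorm (grad f x)) *: grad f x) = 0.
  move=> e e0 es; have [p Bp xp] := dadh e e0.
  apply: (key hd fc k0 kn Bp (hA3 p Bp) (Pr p Bp) xp).
  rewrite /sigma in es; lra.
have sd : 0 < sigma - d by lra.
have [gx0 [t0 [/andP[t00 _] gt0]]] := KEY _ sd (lexx _).
split => //.
set T := Tset f x.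
have Tn : T !=set0 by exists t0; split.
have Tlb : has_lbound T by exists 0 => t [].
set tx := inf T.
have tx0 : 0 <= tx by apply: lb_le_inf Tn _ => t [].
have txle : forall t, T t -> tx <= t by move=> t Tt; exact: (ge_inf Tlb).
have Ttx : T tx.
  have gc := @line_cont R n f x (grad f x) (Num.sg (f x)) (enorm (grad f x)) fc.
  split => //; rewrite /zeroset /=.
  apply/eqP/negPn/negP => hne.
  have gpos : 0 < `|f (x - (tx * Num.sg (f x) / enorm (grad f x)) *: grad f x)| by rewrite normr_gt0.
  have := cvgr_dist_lt _ _ (gc tx) _ gpos.
  move=> /(_ (nbhs_filter tx)) /nbhs_ballP [eps eps0 heps].
  have [t Tt tlt] := inf_adherent eps0 (conj Tn Tlb).
  have bt : ball tx eps t.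
    rewrite -ball_normE /ball_ /= ler0_norm ?subr_le0 ?txle //; lra.
  have := heps t bt; case: Tt => _; rewrite /zeroset /= => ->.
  by rewrite subr0 ltxx.
have eG : 0 < enorm (grad f x).
  rewrite lt_neqAle enorm_ge0 andbT eq_sym; apply/negP => /eqP /enorm_eq0 h.
  by move/eqP: gx0.
exists tx; split => //; split => //; split.
  case: Ttx => _; rewrite /zeroset /= => Bz.
  have := dle _ Bz; rewrite opprB addrC subrK enormZ => h; apply: le_trans h _.
  rewrite !normrM normfV (gtr0_norm eG) (ger0_norm tx0) mulfVK ?gt_eqF //.
  by apply: ler_piMr => //; rewrite normr_sg; case: (f x != 0).
have b1 : forall e, 0 < e -> e <= sigma - d -> tx <= 5/4 * (d + e).
  move=> e e0 es; have [_ [t [/andP[ta tb] ht]]] := KEY e e0 es.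
  apply: le_trans (txle t _) tb; by split.
have b2 : tx <= 5/4 * d.
  apply/ler_addgt0Pr => e e0.
  case: (lerP (4/5 * e) (sigma - d)) => h.
    have := b1 (4/5 * e) ltac:(lra) h; lra.
  have := b1 (sigma - d) sd (lexx _); lra.
have : 5/4 * d <= 2 * cos alpha * d by apply: ler_wpM2r.
lra.
Unshelve. all: by end_near.
Qed.
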